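(* Let $f$ be a bounded modulus function, $\beta\in(0,1]$, $m\ge0$ an integer, $\theta=(k_r)$ a lacunary sequence, and $p=(p_k)$ a sequence of positive reals with $0<h=\inf_kp_k\le p_k\le\sup_kp_k=H<\infty$. If $\lim_{r\to\infty}\frac{h_r}{h_r^\beta}=1$, then $S_\theta^\beta(F,\Delta^m)\subset w_p^\beta(\theta,f,F,\Delta^m)$.
   Context: A fuzzy number is a map $X:\mathbb{R}\to[0,1]$ which is normal, fuzzy convex, upper semicontinuous, with compact closure of $\{t:X(t)>0\}$; $L(\mathbb{R})$ is the set of fuzzy numbers. Level sets $[X]^\alpha=\{t:X(t)\ge\alpha\}$ ($\alpha\in(0,1]$), $[X]^0=\overline{\{t:X(t)>0\}}$, are compact intervals $[u^\alpha,v^\alpha]$. Subtraction: $[X-Y]^\alpha=[u_1^\alpha-v_2^\alpha,v_1^\alpha-u_2^\alpha]$. Metric: $d(X,Y)=\sup_{\alpha\in[0,1]}\max\{|u_1^\alpha-u_2^\alpha|,|v_1^\alpha-v_2^\alpha|\}$. $(\Delta^0X)_k=X_k$, $(\Delta^1X)_k=X_k-X_{k+1}$, $(\Delta^mX)_k=(\Delta^1(\Delta^{m-1}X))_k$. A lacunary sequence is an increasing integer sequence $\theta=(k_r)_{r\ge0}$ with $k_0=0$, $h_r=k_r-k_{r-1}\to\infty$; $I_r=(k_{r-1},k_r]$. A modulus function is $f:[0,\infty)\to[0,\infty)$ with $f(x)=0$ iff $x=0$, $f(x+y)\le f(x)+f(y)$, $f$ increasing, and $f$ right-continuous at $0$.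 $w_p^\beta(\theta,f,F,\Delta^m)$: sequences $X$ of fuzzy numbers with some $X_0\in L(\mathbb{R})$ such that $\lim_r\frac{1}{h_r^\beta}\sum_{k\in I_r}[f(d(\Delta^mX_k,X_0))]^{p_k}=0$. $S_\theta^\beta(F,\Delta^m)$: sequences $X$ with some $X_0\in L(\mathbb{R})$ such that for all $\varepsilon>0$, $\lim_r\frac{1}{h_r^\beta}|\{k\in I_r:d(\Delta^mX_k,X_0)\ge\varepsilon\}|=0$. *)

(* Defs.v *)
From HB Require Import structures.
From mathcomp Require Import all_boot all_order all_algebra.
From mathcomp Require Import all_classical all_reals all_analysis.
Set Implicit Arguments. Unset Strict Implicit. Unset Printing Implicit Defensive.
Import Order.TTheory GRing.Theory Num.Theory.
Import numFieldNormedType.Exports.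
Local Open Scope classical_set_scope.
Local Open Scope ring_scope.

Section FuzzyDefs.
Variable R : realType.

(* a fuzzy set on R is represented by its membership function *)
Definition fuzzy_number (X : R -> R) : Prop :=
  [/\ (forall t, 0 <= X t <= 1),
      (exists t, X t = 1),
      (forall s t l, 0 <= l <= 1 ->
          Num.min (X s) (X t) <= X (l * s + (1 - l) * t)),
      (forall t e, 0 < e -> \forall s \near t, X s < X t + e)
    & compact (closure [set t | 0 < X t])].

Definition levelset (X : R -> R) (a : R) : set R :=
  if a == 0 then closure [set t | 0 < X t] else [set t | a <= X t].

Definition lowerE (X : R -> R) (a : R) : R := inf (levelset X a).
Definition upperE (X : R -> R) (a : R) : R := sup (levelset X a).

(* subtraction: the fuzzy set whose alpha-level sets (alpha in (0,1]) are
   [u1^a - v2^a, v1^a - u2^a]; membership reconstructed from level sets. *)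
Definition fsub (X Y : R -> R) : R -> R := fun t =>
  sup ([set a | 0 < a <= 1 /\
         lowerE X a - upperE Y a <= t <= upperE X a - lowerE Y a] `|` [set 0]).

Definition fdist (X Y : R -> R) : R :=
  sup [set Num.max `|lowerE X a - lowerE Y a| `|upperE X a - upperE Y a|
        | a in [set a : R | 0 <= a <= 1]].

Fixpoint Delta (m : nat) (X : nat -> R -> R) : nat -> R -> R :=
  match m with
  | 0 => X
  | m'.+1 => fun k => fsub (Delta m' X k) (Delta m' X k.+1)
  end.

Definition modulus (f : R -> R) : Prop :=
  [/\ (forall x, 0 <= x -> 0 <= f x),
      (forall x, 0 <= x -> (f x = 0 <-> x = 0)),
      (forall x y, 0 <= x -> 0 <= y -> f (x + y) <= f x + f y),
      (forall x y, 0 <= x -> x <= y -> f x <= f y)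
    & f x @[x --> 0^'+] --> f 0].

Definition bounded_fun0 (f : R -> R) : Prop :=
  exists M : R, forall x, 0 <= x -> f x <= M.

Definition lacunary (th : nat -> nat) : Prop :=
  [/\ th 0 = 0%N, (forall r, (th r < th r.+1)%N)
    & ((th r - th r.-1)%N%:R : R) @[r --> \oo] --> +oo].

(* h_r = k_r - k_{r-1}  (meaningful for r >= 1) *)
Definition hr (th : nat -> nat) (r : nat) : R := ((th r - th r.-1)%N)%:R.

(* I_r = (k_{r-1}, k_r] *)
Definition Ir (th : nat -> nat) (r : nat) : seq nat :=
  index_iota (th r.-1).+1 (th r).+1.

Definition w_space (beta : R) (th : nat -> nat) (f : R -> R) (p : nat -> R)
  (m : nat) (X : nat -> R -> R) : Prop :=
  exists X0, fuzzy_number X0 /\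
    (hr th r `^ beta)^-1 *
      (\sum_(k <- Ir th r) f (fdist (Delta m X k) X0) `^ p k) @[r --> \oo] --> 0.

Definition S_space (beta : R) (th : nat -> nat) (m : nat)
  (X : nat -> R -> R) : Prop :=
  exists X0, fuzzy_number X0 /\
    forall e : R, 0 < e ->
      (hr th r `^ beta)^-1 *
        (count (fun k => e <= fdist (Delta m X k) X0) (Ir th r))%:R
        @[r --> \oo] --> 0.

End FuzzyDefs.
Arguments hr {R}.
Arguments Ir : clear implicits.
Arguments w_space {R}.
Arguments S_space {R}.
Arguments lacunary {R}.
Arguments modulus {R}.
Arguments bounded_fun0 {R}.
Arguments fuzzy_number {R}.

(* Main.v *)
Require Import Defs.
From HB Require Import structures.
From mathcomp Require Import all_boot all_order all_algebra.
From mathcomp Require Import all_classical all_reals all_analysis.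
From mathcomp Require Import ring lra.
Import Order.TTheory GRing.Theory Num.Theory.
Import numFieldNormedType.Exports.
Local Open Scope classical_set_scope.
Local Open Scope ring_scope.

Lemma fdist_ge0 (R : realType) (X Y : R -> R) : 0 <= fdist X Y.
Proof.
rewrite /fdist; set E := [set _ | _ in _].
have [hs|nhs] := pselect (has_sup E); last by rewrite sup_out.
apply: le_trans (sup_upper_bound hs _); last first.
  exists 0; first by rewrite /= lexx ler01.
  reflexivity.
by rewrite le_max normr_ge0.
Qed.

Lemma sum_bound (R : realType) (s : seq nat) (F : nat -> R) (P : pred nat) (c K : R) :
  (forall k, F k <= c + K * (P k)%:R) ->
  \sum_(k <- s) F k <= c * (size s)%:R + K * (count P s)%:R.
Proof.
move=> HF; elim: s => [|a s IH]; first by rewrite big_nil !mulr0 addr0.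
rewrite big_cons /= -[(size s).+1]addn1 natrD natrD mulrDr mulrDr mulr1.
apply: le_trans (lerD (HF a) IH) _.
by rewrite le_eqVlt; apply/orP; left; apply/eqP; ring.
Qed.

Theorem theorem3p3 (R : realType) (f : R -> R) (beta : R) (m : nat)
  (th : nat -> nat) (p : nat -> R) :
  modulus f -> bounded_fun0 f ->
  0 < beta <= 1 ->
  lacunary (R := R) th ->
  (exists h H : R, 0 < h /\ forall k, h <= p k <= H) ->
  hr th r / hr th r `^ beta @[r --> \oo] --> (1 : R) ->
  forall X : nat -> R -> R, (forall k, fuzzy_number (X k)) ->
    S_space beta th m X -> w_space beta th f p m X.
Proof.
move=> [f0 f0iff fsubadd fmono fcont] [M fM] /andP[b0 b1] lac [h [H [h0 hp]]] hcv
  X Xf [X0 [X0f SX]].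
exists X0; split=> //.
set d := fun k => fdist (Delta m X k) X0.
have d0 : forall k, 0 <= d k by move=> k; exact: fdist_ge0.
have hH : h <= H by case/andP: (hp 0%N) => /le_trans; apply.
have pk0 : forall k, 0 < p k by move=> k; case/andP: (hp k) => /(lt_le_trans h0).
have H0 : 0 < H by apply: lt_le_trans hH.
set B := Num.max 1 M.
have B1 : 1 <= B by rewrite le_max lexx.
set K := B `^ H.
have K1 : 1 <= K.
  have := @ge0_ler_powR _ H (ltW H0) 1 B; rewrite powR1; apply; rewrite ?nnegrE ?ler01 //; exact: le_trans ler01 B1.
have K0 : 0 < K by apply: lt_le_trans K1.
have fK : forall k, f (d k) `^ p k <= K.
  move=> k; apply: (@le_trans _ _ (B `^ p k)).
    apply: ge0_ler_powR; first exact: ltW.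
    - by rewrite nnegrE f0.
    - by rewrite nnegrE (le_trans ler01 B1).
    - by apply: le_trans (fM _ (d0 k)) _; rewrite le_max lexx orbT.
  by apply: ler_powR => //; case/andP: (hp k).
apply/cvgr0Pnorm_lt => eta eta0.
set delta := (eta / 4) `^ h^-1.
have delta0 : 0 < delta by apply: powR_gt0; rewrite divr_gt0.
have fz : f 0 = 0 by apply/(f0iff 0 (lexx _)).
have : \forall x \near 0^'+, 0 < x /\ `|f 0 - f x| < Num.min 1 delta.
  near=> x; split; first by near: x; exact: nbhs_right_gt.
  near: x; move/cvgrPdist_lt: fcont; apply.
  by rewrite lt_min ltr01 delta0.
case/filter_ex => eps [eps0]; rewrite fz sub0r normrN.
have fe0 : 0 <= f eps by apply: f0; exact: ltW.
rewrite ger0_norm // lt_min => /andP[fe1 fed].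
set c := f eps `^ h.
have c0 : 0 <= c by apply: powR_ge0.
have ceta : c <= eta / 4.
  have -> : eta / 4 = delta `^ h.
    by rewrite /delta -powRrM mulVf ?gt_eqF // powRr1 // divr_ge0 // ltW.
  apply: ge0_ler_powR; first exact: ltW.
  - by rewrite nnegrE.
  - by rewrite nnegrE ltW.
  - exact: ltW.
have term : forall k, f (d k) `^ p k <= c + K * (eps <= d k)%R%:R.
  move=> k; have [_|dk] := leP eps (d k); first by rewrite mulr1 (le_trans (fK k)) // lerDr.
  rewrite mulr0 addr0.
  apply: (@le_trans _ _ (f eps `^ p k)).
    apply: ge0_ler_powR; first exact: ltW.
    - by rewrite nnegrE f0.
    - by rewrite nnegrE.
    - by apply: fmono => //; exact: ltW.
  have [->|fne] := eqVneq (f eps) 0; first by rewrite powR0 ?gt_eqF.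
  apply: ger_powR; last by case/andP: (hp k).
  by rewrite lt_neqAle eq_sym fne fe0 ltW.
have Hc := SX eps eps0.
move/cvgr0Pnorm_lt: Hc => /(_ (eta / (2 * K))).
rewrite divr_gt0 ?mulr_gt0 // => /(_ isT) Hcount.
move/cvgrPdist_lt: hcv => /(_ 1 ltr01) Hratio.
near=> r.
have Hc1 : `|(hr th r `^ beta)^-1 * (count (fun k => eps <= d k) (Ir th r))%:R| < eta / (2 * K).
  by near: r; exact: Hcount.
have Hr1 : `|1 - hr th r / hr th r `^ beta| < 1 by near: r; exact: Hratio.
set S := \sum_(k <- Ir th r) _.
set q := (hr th r `^ beta)^-1.
have q0 : 0 <= q by rewrite invr_ge0 powR_ge0.
have S0 : 0 <= S by apply: sumr_ge0 => k _; exact: powR_ge0.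
rewrite ger0_norm ?mulr_ge0 //.
have HS : S <= c * hr th r + K * (count (fun k => eps <= d k) (Ir th r))%:R.
  have -> : hr th r = (size (Ir th r))%:R.
    by rewrite /Ir /index_iota size_iota subSS.
  exact: sum_bound.
apply: (@le_lt_trans _ _ (q * (c * hr th r + K * (count (fun k => eps <= d k) (Ir th r))%:R))).
  exact: ler_wpM2l.
set n := (count _ _)%:R in HS Hc1 *.
have n0 : 0 <= n by [].
rewrite ger0_norm ?mulr_ge0 // in Hc1.
have rat0 : 0 <= hr th r / hr th r `^ beta.
  by rewrite divr_ge0 // ?powR_ge0 // /hr ler0n.
have rat2 : hr th r / hr th r `^ beta <= 2.
  move: Hr1; rewrite ltr_distlC => /andP[_ Hr2]; apply: ltW; apply: (lt_le_trans Hr2); lra.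
have A : c * (hr th r / hr th r `^ beta) <= eta / 4 * 2 by apply: ler_pM.
have : K * (q * n) < K * (eta / (2 * K)) by rewrite ltr_pM2l.
have -> : K * (eta / (2 * K)) = eta / 2.
  by field; rewrite gt_eqF.
move=> Bn.
have -> : q * (c * hr th r + K * n) = c * (hr th r / hr th r `^ beta) + K * (q * n).
  by rewrite /q; ring.
lra.
Unshelve. all: by end_near.
Qed.
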